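(* For $n\ge2$, $c_n=|\mathcal C_n(321)|\ge |S_{n-1}(132,231)|=2^{n-2}$.
   Context: A permutation $\pi=\pi_1\cdots\pi_n$ (one-line notation) contains a classical pattern $p\in S_k$ if some subsequence $\pi_{t_1}\cdots\pi_{t_k}$ ($t_1<\dots<t_k$) is order-isomorphic to $p$; otherwise it avoids $p$. $S_m(132,231)$ is the set of permutations of $[m]$ avoiding both $132$ and $231$. $\mathcal C_n$ is the set of cyclic permutations of $[n]$ (a single $n$-cycle), $\mathcal C_n(321)$ those avoiding $321$, and $c_n=|\mathcal C_n(321)|$. *)

(* Defs.v *)
From mathcomp Require Import all_boot all_fingroup.
Set Implicit Arguments. Unset Strict Implicit. Unset Printing Implicit Defensive.

(* Permutations of [n] are represented as {perm 'I_n} (0-based values);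
   one-line notation: pi_1 ... pi_n = pi 0, ..., pi (n-1). *)

Definition contains (n : nat) (pi : {perm 'I_n}) (p : seq nat) : bool :=
  [exists t : {ffun 'I_(size p) -> 'I_n},
     [forall i : 'I_(size p), forall j : 'I_(size p),
        ((i < j) ==> (t i < t j)) &&
        ((pi (t i) < pi (t j)) == (nth 0 p i < nth 0 p j))]].

Definition avoids (n : nat) (pi : {perm 'I_n}) (p : seq nat) : bool :=
  ~~ contains pi p.

Definition p132 : seq nat := [:: 1; 3; 2].
Definition p231 : seq nat := [:: 2; 3; 1].
Definition p321 : seq nat := [:: 3; 2; 1].

Definition cyclic_perm (n : nat) (pi : {perm 'I_n}) : bool :=
  #|porbits pi| == 1.

Definition S_av_132_231 (m : nat) : {set {perm 'I_m}} :=
  [set pi | avoids pi p132 && avoids pi p231].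

Definition C_av_321 (n : nat) : {set {perm 'I_n}} :=
  [set pi | cyclic_perm pi && avoids pi p321].

Definition c_ (n : nat) : nat := #|C_av_321 n|.

(* Main.v *)
Require Import Defs.
From mathcomp Require Import all_boot all_fingroup.
From mathcomp Require Import zify.
Set Implicit Arguments. Unset Strict Implicit. Unset Printing Implicit Defensive.
Lemma contains3 m (pi : {perm 'I_m}) (x0 x1 x2 : nat) (a b c : 'I_m) :
  a < b -> b < c ->
  (pi a < pi b) = (x0 < x1) -> (pi b < pi a) = (x1 < x0) ->
  (pi a < pi c) = (x0 < x2) -> (pi c < pi a) = (x2 < x0) ->
  (pi b < pi c) = (x1 < x2) -> (pi c < pi b) = (x2 < x1) ->
  contains pi [:: x0; x1; x2].
Proof.
move=> ab bc e1 e2 e3 e4 e5 e6.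
apply/existsP; exists [ffun k : 'I_3 => if val k == 0 then a else if val k == 1 then b else c].
apply/forallP => i; apply/forallP => j; rewrite !ffunE.
case: i => [[|[|[|i]]] Hi] //; case: j => [[|[|[|j]]] Hj] //=;
  rewrite ?ltnn ?eqxx ?ab ?bc ?e1 ?e2 ?e3 ?e4 ?e5 ?e6 ?(ltn_trans ab bc) //=.
Qed.

Definition Vsh m (pi : {perm 'I_m}) : bool :=
  [exists q : 'I_m, [forall i : 'I_m, forall j : 'I_m,
    (i < j) ==> ((j <= q) ==> (pi j < pi i)) && ((q <= i) ==> (pi i < pi j))]].

Lemma VshP m (pi : {perm 'I_m}) :
  reflect (exists q : 'I_m, forall i j : 'I_m, i < j ->
             (j <= q -> pi j < pi i) /\ (q <= i -> pi i < pi j)) (Vsh pi).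
Proof.
apply: (iffP existsP) => [[q /forallP H]|[q H]]; exists q.
  move=> i j ij; move/forallP: (H i) => /(_ j); rewrite ij /= => /andP[h1 h2].
  by split=> h; [apply: (implyP h1) | apply: (implyP h2)].
apply/forallP => i; apply/forallP => j; apply/implyP => ij.
by case: (H i j ij) => h1 h2; apply/andP; split; apply/implyP.
Qed.

Lemma perm_neq m (pi : {perm 'I_m}) (i j : 'I_m) : i < j -> (pi i : nat) != pi j.
Proof. move=> ij; apply/eqP => /val_inj/perm_inj e; by rewrite e ltnn in ij. Qed.

Ltac bfact := first [ by apply/idP/idP => ?; lia | lia ].

Lemma avoid_V m (pi : {perm 'I_m.+1}) :
  avoids pi p132 -> avoids pi p231 -> Vsh pi.
Proof.
move=> /negP A132 /negP A231; apply/VshP.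
pose q := (pi^-1)%g ord0.
have pq : (pi q : nat) = 0 by rewrite /q permKV.
exists q => i j ij; split => h.
- have nij := perm_neq pi (ij).
  have [jq|jq] := eqVneq j q.
    move: (perm_neq pi (leq_trans ij h)); rewrite jq pq; lia.
  have jq' : j < q by rewrite ltn_neqAle h andbT; apply: contra jq => /eqP/val_inj ->.
  have niq := perm_neq pi ((ltn_trans ij jq')).
  have njq := perm_neq pi (jq').
  rewrite ltnNge leq_eqVlt (negbTE nij) /=; apply/negP => lt.
  apply: A231; apply: (contains3 (a:=i) (b:=j) (c:=q)) => //=; bfact.
- have nij := perm_neq pi (ij).
  have [iq|iq] := eqVneq i q.
    move: (perm_neq pi ij); rewrite iq pq; lia.
  have qi' : q < i by rewrite ltn_neqAle h andbT; apply: contra iq => /eqP/val_inj ->.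
  have niq := perm_neq pi ((ltn_trans qi' ij)).
  have njq := perm_neq pi (qi').
  rewrite ltnNge leq_eqVlt eq_sym (negbTE nij) /=; apply/negP => lt.
  apply: A132; apply: (contains3 (a:=q) (b:=i) (c:=j)) => //=; bfact.
Qed.

Lemma contains_peak m (pi : {perm 'I_m}) (x0 x1 x2 : nat) :
  x0 < x1 -> x2 < x1 -> contains pi [:: x0; x1; x2] ->
  exists a b c : 'I_m, [/\ a < b, b < c, pi a < pi b & pi c < pi b].
Proof.
move=> h01 h21 /existsP[t /forallP H].
pose o0 := @Ordinal 3 0 isT. pose o1 := @Ordinal 3 1 isT. pose o2 := @Ordinal 3 2 isT.
have e01 := forallP (H o0) o1. have e12 := forallP (H o1) o2.
have e21 := forallP (H o2) o1.
move: e01 e12 e21 => /= /andP[a1 /eqP b1] /andP[a2 _] 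
  /eqP b3.
exists (t o0), (t o1), (t o2); split => //; [by rewrite b1 | by rewrite b3].
Qed.

Lemma V_avoid m (pi : {perm 'I_m}) (x0 x1 x2 : nat) :
  x0 < x1 -> x2 < x1 -> Vsh pi -> ~~ contains pi [:: x0; x1; x2].
Proof.
move=> h01 h21 /VshP[q H]; apply/negP => /(contains_peak h01 h21)[a [b [c [ab bc pab pcb]]]].
have [bq|qb] := leqP b q.
  by have [/(_ bq) + _] := H a b ab; lia.
by have [_ /(_ (ltnW qb))] := H b c bc; lia.
Qed.

Lemma V_liftmax m (s : 'S_m.+1) : Vsh (lift_perm ord_max ord_max s) = Vsh s.
Proof.
set pi := lift_perm _ _ s.
have pl k : (pi (lift ord_max k) : nat) = s k by rewrite lift_perm_lift lift_max.
have pm : (pi ord_max : nat) = m.+1 by rewrite lift_perm_id.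
apply/VshP/VshP => [[q H]|[q H]].
  exists (inord (minn q m)) => i j ij; rewrite inordK; last by lia.
  have := H (lift ord_max i) (lift ord_max j); rewrite !lift_max !pl => /(_ ij) [h1 h2].
  split => h; [apply: h1 | apply: h2]; have := ltn_ord j; lia.
exists (lift ord_max q) => i j; rewrite lift_max.
case: (unliftP ord_max i) => [i'|] ->; case: (unliftP ord_max j) => [j'|] ->;
  rewrite ?lift_max ?pl ?pm /=.
- by move=> ij; apply: H.
- move=> _; have := ltn_ord q; have := ltn_ord (s i'); lia.
- by move=> ij; have hj := ltn_ord (j' : 'I_m.+1); lia.
- by rewrite ltnn.
Qed.

Lemma V_lift0 m (s : 'S_m.+1) : Vsh (lift_perm ord0 ord_max s) = Vsh s.
Proof.
set pi := lift_perm _ _ s.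
have pl k : (pi (lift ord0 k) : nat) = s k by rewrite lift_perm_lift lift_max.
have pm : (pi ord0 : nat) = m.+1 by rewrite lift_perm_id.
apply/VshP/VshP => [[q H]|[q H]].
  have qlt := ltn_ord q.
  exists (inord q.-1) => i j ij; rewrite inordK; last by lia.
  have := H (lift ord0 i) (lift ord0 j); rewrite !lift0 !pl => /(_ ij) [h1 h2].
  split => h; [apply: h1 | apply: h2]; lia.
exists (lift ord0 q) => i j; rewrite lift0.
case: (unliftP ord0 i) => [i'|] ->; case: (unliftP ord0 j) => [j'|] ->;
  rewrite ?lift0 ?pl ?pm /=.
- by move=> ij; have [h1 h2] := H i' j' ij; split => h; [apply: h1|apply: h2]; lia.
- lia.
- move=> _; have := ltn_ord (s j'); lia.
- lia.
Qed.

Lemma V_max m (pi : 'S_m.+2) : Vsh pi ->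
  (pi ord0 = ord_max) \/ (pi ord_max = ord_max).
Proof.
move=> /VshP[q H].
pose k := (pi^-1)%g ord_max.
have pk : pi k = ord_max by rewrite /k permKV.
have [k0|k0] := eqVneq k ord0; first by left; move: pk; rewrite k0.
have [km|km] := eqVneq k ord_max; first by right; move: pk; rewrite km.
exfalso.
have k0' : 0 < k by rewrite lt0n; apply: contra k0 => /eqP e; apply/eqP/val_inj.
have km' : k < m.+1 by have := ltn_ord k; rewrite ltnS leq_eqVlt => /orP[/eqP e|//];
  case/eqP: km; apply/val_inj.
have [kq|qk] := leqP k q.
  have [/(_ kq) + _] := H ord0 k k0'; rewrite pk /=; have := ltn_ord (pi ord0); lia.
have [_ /(_ (ltnW qk))] := H k ord_max km'; rewrite pk /=; have := ltn_ord (pi ord_max); lia.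
Qed.

Lemma lift_perm_surj n (pi : 'S_n.+1) (i : 'I_n.+1) :
  exists s : 'S_n, pi = lift_perm i (pi i) s.
Proof.
pose f (k : 'I_n) := odflt k (unlift (pi i) (pi (lift i k))).
have fE k : lift (pi i) (f k) = pi (lift i k).
  rewrite /f; case: (unliftP (pi i) (pi (lift i k))) => [w -> //|/perm_inj/eqP].
  by rewrite eq_sym (negbTE (neq_lift i k)).
have finj : injective f.
  by move=> k1 k2 e; apply: (@lift_inj _ i); apply: (@perm_inj _ pi); rewrite -!fE e.
exists (perm finj); apply/permP => x.
case: (unliftP i x) => [k|] ->; first by rewrite lift_perm_lift permE fE.
by rewrite lift_perm_id.
Qed.

Lemma lift_perm_inj n (i j : 'I_n.+1) : injective (@lift_perm n i j).
Proof.
move=> s t e; apply/permP => k; apply: (@lift_inj _ j).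
by rewrite -!(@lift_perm_lift _ i j) e.
Qed.

Lemma card_V m : #|[set pi : 'S_m.+1 | Vsh pi]| = 2 ^ m.
Proof.
elim: m => [|m IH].
  rewrite (_ : [set pi | Vsh pi] = setT) ?cardsT ?card_Sn //.
  apply/setP => pi; rewrite !inE; apply/VshP; exists ord0 => i j.
  by case: i => [[]] // ? ; case: j => [[]].
set V1 := [set pi : 'S_m.+1 | Vsh pi].
have -> : [set pi : 'S_m.+2 | Vsh pi] =
   (@lift_perm m.+1 ord0 ord_max @: V1) :|: (@lift_perm m.+1 ord_max ord_max @: V1).
  apply/setP => pi; rewrite !inE; apply/idP/idP.
    move=> Vp; case: (V_max Vp) => e.
      have [s es] := lift_perm_surj pi ord0; rewrite e in es.
      apply/orP; left; apply/imsetP; exists s => //.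
      by rewrite inE -V_lift0 -es.
    have [s es] := lift_perm_surj pi ord_max; rewrite e in es.
    apply/orP; right; apply/imsetP; exists s => //.
    by rewrite inE -V_liftmax -es.
  case/orP => /imsetP[s]; rewrite inE => Vs ->.
    by rewrite V_lift0.
  by rewrite V_liftmax.
rewrite cardsU !card_imset ?IH; try exact: lift_perm_inj.
rewrite (_ : _ :&: _ = set0) ?cards0 ?subn0 ?expnS ?mul2n ?addnn //.
apply/setP => pi; rewrite !inE; apply/negP => /andP[/imsetP[s _ ->] /imsetP[t _ e]].
have := congr1 (fun f : 'S_m.+2 => f ord0) e.
rewrite lift_perm_id.
have -> : (ord0 : 'I_m.+2) = lift ord_max (ord0 : 'I_m.+1) by apply: val_inj.
rewrite lift_perm_lift => /eqP; rewrite (negbTE (neq_lift _ _)).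
by [].
Qed.

Section P2.
Variable m : nat.

Definition rho (pi : 'S_m.+1) : 'S_m.+2 :=
  lift_perm ord0 ord0 (pi * perm (@rev_ord_inj m.+1)).
Definition cyc : 'S_m.+2 := perm (@ordS_inj m.+2).
Definition sig (pi : 'S_m.+1) : 'S_m.+2 := (cyc ^ rho pi)%g.

Definition fr (pi : 'S_m.+1) (k : nat) : nat :=
  if k is k'.+1 then (m - pi (inord k')).+1 else 0.

Lemma rhoE pi (k : 'I_m.+2) : (rho pi k : nat) = fr pi k.
Proof.
case: (unliftP ord0 k) => [k'|] ->; last by rewrite /rho lift_perm_id.
rewrite /rho lift_perm_lift lift0 permM permE /= inord_val.
by have := ltn_ord (pi k'); lia.
Qed.

Lemma rho0 pi : rho pi ord0 = ord0.
Proof. exact: lift_perm_id. Qed.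

Lemma cycX i (k : 'I_m.+2) : ((cyc ^+ i)%g k : nat) = (k + i) %% m.+2.
Proof.
elim: i => [|i IH]; first by rewrite expg0 perm1 addn0 modn_small.
by rewrite expgSr permM permE /= IH -(addn1 ((k+i) %% _)) modnDml addn1 addnS.
Qed.

Lemma cycE (k : 'I_m.+2) : (cyc k : nat) = k.+1 %% m.+2.
Proof. by rewrite /cyc permE. Qed.

Lemma sigX pi i (k : 'I_m.+2) : ((sig pi) ^+ i)%g (rho pi k) = rho pi ((cyc ^+ i)%g k).
Proof. by rewrite /sig -conjXg permJ. Qed.

Lemma sig_cyclic pi : #|porbits (sig pi)| = 1.
Proof.
have key x : x \in porbit (sig pi) ord0.
  apply/porbitP; exists ((rho pi)^-1%g x).
  rewrite -{1}(rho0 pi).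
  rewrite sigX; apply: (@perm_inj _ ((rho pi)^-1)%g); rewrite permK.
  by apply: ord_inj; rewrite cycX add0n modn_small.
suff -> : porbits (sig pi) = [set porbit (sig pi) ord0] by rewrite cards1.
apply/setP => X; rewrite !inE; apply/imsetP/eqP => [[x _ ->]|->]; last by exists ord0.
by apply/eqP; rewrite eq_porbit_mem.
Qed.

Lemma rho_pow pi (k : 'I_m.+2) : ((sig pi) ^+ k)%g ord0 = rho pi k.
Proof.
rewrite -{1}(rho0 pi).
by rewrite sigX; congr (rho pi _); apply: ord_inj; rewrite cycX add0n modn_small.
Qed.

Lemma sig_inj : injective sig.
Proof.
move=> p1 p2 e.
have er : rho p1 = rho p2 by apply/permP => k; rewrite -!rho_pow e.
by move/lift_perm_inj: er => /mulIg.
Qed.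

Section P3.
Variables (pi : 'S_m.+1) (q : 'I_m.+1).
Hypothesis H : forall i j : 'I_m.+1, i < j ->
  (j <= q -> pi j < pi i) /\ (q <= i -> pi i < pi j).

Lemma fr_L1 k l : k < l -> l <= q.+1 -> fr pi k < fr pi l.
Proof.
have qm := ltn_ord q.
case: l => [//|l'] /=; case: k => [//|k'] /= kl lq.
have e1 : (inord k' : 'I_m.+1) = k' :> nat by rewrite inordK //; lia.
have e2 : (inord l' : 'I_m.+1) = l' :> nat by rewrite inordK //; lia.
have kl' : (inord k' : 'I_m.+1) < (inord l' : 'I_m.+1) by rewrite e1 e2; lia.
have [h1 _] := H kl'.
have h : pi (inord l') < pi (inord k') by apply: h1; rewrite e2; lia.
have := ltn_ord (pi (inord k')); have := ltn_ord (pi (inord l')); lia.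
Qed.

Lemma fr_L2 k l : q.+1 <= k -> k < l -> l <= m.+1 -> fr pi l < fr pi k.
Proof.
case: l => [//|l'] /=; case: k => [//|k'] /= qk kl lm.
have e1 : (inord k' : 'I_m.+1) = k' :> nat by rewrite inordK //; lia.
have e2 : (inord l' : 'I_m.+1) = l' :> nat by rewrite inordK //; lia.
have kl' : (inord k' : 'I_m.+1) < (inord l' : 'I_m.+1) by rewrite e1 e2; lia.
have [_ h2] := H kl'.
have h : pi (inord k') < pi (inord l') by apply: h2; rewrite e1; lia.
have := ltn_ord (pi (inord k')); have := ltn_ord (pi (inord l')); lia.
Qed.

Lemma modS_case k : k < m.+2 -> k.+1 %% m.+2 = if k == m.+1 then 0 else k.+1.
Proof.
move=> km; case: eqP => [->|ne]; first by rewrite modnn.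
by rewrite modn_small //; lia.
Qed.

Lemma fr_mono k l : k < m.+2 -> l < m.+2 -> fr pi k < fr pi l ->
  (k <= q) = (l <= q) -> fr pi (k.+1 %% m.+2) < fr pi (l.+1 %% m.+2).
Proof.
move=> km lm fkl cl; have qm := ltn_ord q.
rewrite !modS_case //.
have [kq|qk] := leqP k q.
  have lq : l <= q by rewrite -cl.
  have [lk|kl] := leqP l k.
    have := fr_L1 (k:=l) (l:=k); rewrite leq_eqVlt in lk; case/orP: lk => [/eqP e|lk].
      by move: fkl; rewrite e ltnn.
    by move/(_ lk); lia.
  have -> : (k == m.+1) = false by lia.
  have -> : (l == m.+1) = false by lia.
  apply: fr_L1; lia.
have ql : q < l by rewrite ltnNge -cl -ltnNge.
have [kl|lk] := leqP k l.
  rewrite leq_eqVlt in kl; case/orP: kl => [/eqP e|kl].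
    by move: fkl; rewrite e ltnn.
  by have := fr_L2 qk kl; lia.
have -> : (l == m.+1) = false by lia.
case: eqP => [_|ne]; first by [].
apply: fr_L2; lia.
Qed.
End P3.
End P2.

Lemma contains_dec m (s : 'S_m) (x0 x1 x2 : nat) :
  x1 < x0 -> x2 < x1 -> contains s [:: x0; x1; x2] ->
  exists a b c : 'I_m, [/\ a < b, b < c, ~~ (s a < s b) & ~~ (s b < s c)].
Proof.
move=> h10 h21 /existsP[t /forallP H].
pose o0 := @Ordinal 3 0 isT. pose o1 := @Ordinal 3 1 isT. pose o2 := @Ordinal 3 2 isT.
have e01 := forallP (H o0) o1. have e12 := forallP (H o1) o2.
move: e01 e12 => /= /andP[a1 /eqP b1] /andP[a2 /eqP b2].
exists (t o0), (t o1), (t o2); split => //; [rewrite b1 | rewrite b2]; apply/negP; lia.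
Qed.

Lemma sig_avoid m (pi : 'S_m.+1) : Vsh pi -> avoids (sig pi) p321.
Proof.
move=> /VshP[q H].
pose cl (x : 'I_m.+2) := ((rho pi)^-1%g x <= q).
have mono (x y : 'I_m.+2) : x < y -> cl x = cl y -> sig pi x < sig pi y.
  move=> xy; rewrite /cl; set k := (rho pi)^-1%g x; set l := (rho pi)^-1%g y => cxy.
  have ex : x = rho pi k by rewrite permKV.
  have ey : y = rho pi l by rewrite permKV.
  move: xy; rewrite ex ey /sig !permJ !rhoE !cycE => xy.
  by apply: (fr_mono H) => //; apply: ltn_ord.
rewrite /avoids; apply/negP => hc.
have := contains_dec (x0:=3) (x1:=2) (x2:=1) isT isT hc.
case=> a [b [c [ab bc nab nbc]]].
have ac := ltn_trans ab bc.
case ea: (cl a); case eb: (cl b); case ec: (cl c).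
all: first [ by move: (mono a b ab (etrans ea (esym eb))); rewrite (negbTE nab)
           | by move: (mono b c bc (etrans eb (esym ec))); rewrite (negbTE nbc)
           | by move: (mono a c ac (etrans ea (esym ec))); lia ].
Qed.

Lemma S_V m : S_av_132_231 m.+1 = [set pi | Vsh pi].
Proof.
apply/setP => pi; rewrite !inE; apply/idP/idP.
  by case/andP; apply: avoid_V.
by move=> V; rewrite /avoids !V_avoid.
Qed.

Theorem mainTheorem6 (n : nat) : 2 <= n ->
  c_ n >= #|S_av_132_231 n.-1| /\ #|S_av_132_231 n.-1| = 2 ^ (n - 2).
Proof.
case: n => [|[|m]] // _.
have -> : m.+2 - 2 = m by lia.
rewrite [m.+2.-1]/= S_V card_V; split => //.
rewrite -(card_V m) -(card_imset _ (@sig_inj m)) /c_.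
apply: subset_leq_card; apply/subsetP => s /imsetP[pi]; rewrite inE => V ->.
by rewrite inE /cyclic_perm sig_cyclic eqxx sig_avoid.
Qed.
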